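(* Let $N=2$, $v_1<v_2$, prior probabilities $p(v_1),p(v_2)>0$ summing to $1$, and $\lambda,\sigma_Z,T>0$. Let the signal be $\tilde z\sim N(0,\sigma_Z^2T)$ with the optimal posteriors $p(v_n|z)=e^{(v_nz+\mu_n)/\lambda}/\sum_{n'=1}^2e^{(v_{n'}z+\mu_{n'})/\lambda}$, where $(\mu_1,\mu_2)$ is chosen (uniquely up to a common additive constant) so that $\mathbb E[p(v_n|\tilde z)]=p(v_n)$ for $n=1,2$. Then the density of the conditional expected payoff $\mathbb E[\tilde v|\tilde z]=\sum_nv_np(v_n|\tilde z)$ is $$f_s(v)=\frac{\lambda}{\sigma_Z\sqrt T\,(v_2-v)(v-v_1)}\,\phi\Big(\frac{\lambda}{\sigma_Z\sqrt T(v_1-v_2)}\log\Big(\frac{v_2-v}{v-v_1}\Big)-\frac{\mu_1-\mu_2}{\sigma_Z\sqrt T(v_1-v_2)}\Big),\qquad v\in(v_1,v_2),$$ where $\phi$ is the standard normal density.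
   Context: These posteriors are the optimal posteriors of the informed trader's problem of maximizing expected Kyle–Back trading profit minus the mutual-information cost $\lambda I(\tilde s;\tilde v)$ when the normal signal $\tilde z$ is used. *)

(* Defs.v *)
From HB Require Import structures.
From mathcomp Require Import all_boot all_order all_algebra.
From mathcomp Require Import all_classical all_reals all_analysis.
Set Implicit Arguments. Unset Strict Implicit. Unset Printing Implicit Defensive.
Import Order.TTheory GRing.Theory Num.Theory.
Local Open Scope ring_scope.

Section defs.
Context {R : realType}.

Definition post_w (lam vn mun z : R) : R := expR ((vn * z + mun) / lam).

Definition post1 (lam v1 v2 mu1 mu2 z : R) : R :=
  post_w lam v1 mu1 z / (post_w lam v1 mu1 z + post_w lam v2 mu2 z).
Definition post2 (lam v1 v2 mu1 mu2 z : R) : R :=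
  post_w lam v2 mu2 z / (post_w lam v1 mu1 z + post_w lam v2 mu2 z).

Definition cond_exp (lam v1 v2 mu1 mu2 z : R) : R :=
  v1 * post1 lam v1 v2 mu1 mu2 z + v2 * post2 lam v1 v2 mu1 mu2 z.

Definition std_phi (x : R) : R := normal_pdf 0 1 x.

Definition f_s (lam sZ T v1 v2 mu1 mu2 v : R) : R :=
  lam / (sZ * Num.sqrt T * (v2 - v) * (v - v1)) *
  std_phi (lam / (sZ * Num.sqrt T * (v1 - v2)) * ln ((v2 - v) / (v - v1))
           - (mu1 - mu2) / (sZ * Num.sqrt T * (v1 - v2))).
End defs.

(* Main.v *)
Require Import Defs.
From HB Require Import structures.
From mathcomp Require Import all_boot all_order all_algebra.
From mathcomp Require Import all_classical all_reals all_analysis.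
From mathcomp Require Import measurable_realfun.
From mathcomp Require Import ring lra.
Import Order.TTheory GRing.Theory Num.Theory.
Local Open Scope classical_set_scope.
Local Open Scope ring_scope.

Module Aux.
Import numFieldNormedType.Exports.
Section s. Context {R : realType}.
Variables (lam v1 v2 mu1 mu2 : R).
Let k := (v1 - v2) / lam.
Let c := (mu1 - mu2) / lam.
Definition EE (z : R) := expR (k * z + c).
Definition gform (z : R) := v1 + (v2 - v1) * (1 + EE z)^-1.
Definition Dg (z : R) := (v2 - v1) * ((v2 - v1) / lam) * EE z / (1 + EE z) ^+ 2.

Lemma EE_gt0 z : 0 < EE z. Proof. exact: expR_gt0. Qed.

Lemma g_eq : lam != 0 -> cond_exp lam v1 v2 mu1 mu2 =1 gform.
Proof.
move=> l0 z; rewrite /cond_exp /post1 /post2 /gform /post_w /EE.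
have -> : expR ((v1 * z + mu1) / lam) = expR (k * z + c) * expR ((v2 * z + mu2) / lam).
  by rewrite -expRD; congr expR; rewrite /k /c; field.
set a := expR (k * z + c); set b := expR _.
have a0 : 0 < a by exact: expR_gt0.
have b0 : 0 < b by exact: expR_gt0.
field; apply/andP; split; apply: lt0r_neq0; [exact: addr_gt0|exact: addr_gt0 (mulr_gt0 a0 b0) b0].
Qed.

Lemma dlin (z : R) : is_derive z 1 (fun z : R => k * z + c) k.
Proof. by apply: is_derive_eq; rewrite addr0 -[RHS]mulr1. Qed.

Lemma dEE (z : R) : is_derive z 1 EE (EE z * k).
Proof.
exact: (@is_derive1_comp _ expR (fun z => k * z + c) z _ _ (is_derive_expR _) (dlin z)).
Qed.

#[local] Existing Instance dEE.
Lemma dgform (z : R) : lam != 0 -> is_derive z 1 gform (Dg z).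
Proof.
move=> l0.
have h : is_derive z 1 (fun y => (1 + EE y)^-1) (- (1 + EE z) ^- 2 *: (EE z * k)).
  apply: is_deriveV; first by rewrite gt_eqF// addr_gt0// ?ltr01 ?EE_gt0.
  have -> : (fun y : R => 1 + EE y) = (cst (1:R) + EE)%R by [].
  rewrite -[X in is_derive _ _ _ X]add0r.
  apply: is_deriveD.
rewrite /gform.
apply: is_derive_eq.
change ((0+1) * ((v2 - v1) * (- (1 + EE z) ^- 2 * (EE z * k))) = Dg z).
have e0 : 1 + EE z != 0 by rewrite gt_eqF// addr_gt0// ?ltr01 ?EE_gt0.
rewrite /Dg /k; field; exact/andP.
Qed.
Lemma key (sZ T z : R) : 0 < lam -> v1 < v2 -> 0 < sZ * Num.sqrt T ->
  f_s lam sZ T v1 v2 mu1 mu2 (gform z) * Dg z = normal_pdf 0 (sZ * Num.sqrt T) z.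
Proof.
move=> l0 v12 s0.
have e0 : 0 < EE z := EE_gt0 z.
have e1 : 1 + EE z != 0 by rewrite gt_eqF// addr_gt0// ?ltr01.
have l0' : lam != 0 by rewrite gt_eqF.
have d0 : v2 - v1 != 0 by rewrite subr_eq0 gt_eqF.
have d0' : v1 - v2 != 0 by rewrite subr_eq0 lt_eqF.
have s0' : sZ * Num.sqrt T != 0 by rewrite gt_eqF.
have e0' : EE z != 0 by rewrite gt_eqF.
have h1 : v2 - gform z = (v2-v1) * EE z / (1+EE z) by rewrite /gform; field.
have h2 : gform z - v1 = (v2-v1)/(1+EE z) by rewrite /gform; field.
have h3 : (v2 - gform z)/(gform z - v1) = EE z by rewrite h1 h2; field; rewrite e1 d0.
rewrite /f_s h3 {1}/EE expRK.
set s := sZ * Num.sqrt T.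
have sn : s != 0 := s0'. have sp : 0 < s := s0. clearbody s.
have h4 : lam / (s * (v1 - v2)) * (k * z + c) - (mu1 - mu2) / (s * (v1 - v2)) = z / s.
  by rewrite /k /c; field; rewrite sn d0' l0'.
rewrite h4 /std_phi !normal_pdfE ?oner_neq0 //.
have hp : normal_peak s = normal_peak 1 / s.
  rewrite /normal_peak expr1n mul1r -mulrnAr sqrtrM ?sqr_ge0 // sqrtr_sqr gtr0_norm //.
  by rewrite invfM mulrC.
have hf : normal_fun 0 1 (z / s) = normal_fun 0 s z.
  rewrite /normal_fun !subr0 expr1n expr_div_n -[(s ^+ 2) *+ 2]mulr_natr.
  by congr expR; field.
rewrite hp hf h1 h2 /Dg.
have p0 : normal_peak 1 != 0 :> R by rewrite gt_eqF // normal_peak_gt0 // oner_neq0.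
move: p0 e1 e0'; set X := normal_fun _ _ _; set Q := normal_peak _; set E := EE z => p0 e1 e0'.
clearbody X Q E.
by field; rewrite sn e1 l0' d0 e0'.
Qed.
Definition qf (x : R) := (v2 - x) / (x - v1).
Definition hinv (x : R) := (lam * ln (qf x) - (mu1 - mu2)) / (v1 - v2).

Lemma qf_gt0 x : v1 < x < v2 -> 0 < qf x.
Proof. by case/andP => h1 h2; rewrite /qf divr_gt0 // subr_gt0. Qed.

Lemma cont_qf x : v1 < x < v2 -> {for x, continuous qf}.
Proof.
case/andP => h1 h2.
apply: continuousM; first by apply: continuousB; [exact: cvg_cst|exact: cvg_id].
apply: continuousV; first by rewrite subr_eq0 gt_eqF.
by apply: continuousB; [exact: cvg_id|exact: cvg_cst].
Qed.

Lemma cont_lnqf x : v1 < x < v2 -> {for x, continuous (fun y => ln (qf y))}.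
Proof.
move=> hx; exact: (continuous_comp (cont_qf _ hx) (continuous_ln (qf_gt0 _ hx))).
Qed.

Lemma cont_hinv x : v1 < x < v2 -> {for x, continuous hinv}.
Proof.
move=> hx; rewrite /hinv.
apply: continuousM; last exact: cvg_cst.
apply: continuousB; last exact: cvg_cst.
apply: continuousM; first exact: cvg_cst.
exact: (cont_lnqf _ hx).
Qed.

Lemma cont_fs sZ T x : sZ * Num.sqrt T != 0 -> v1 < x < v2 ->
  {for x, continuous (f_s lam sZ T v1 v2 mu1 mu2)}.
Proof.
move=> sn hx; have /andP[h1 h2] := hx.
rewrite /f_s /std_phi.
apply: continuousM.
  apply: continuousM; first exact: cvg_cst.
  apply: continuousV.
    by apply: mulf_neq0; [apply: mulf_neq0 => //|]; rewrite subr_eq0 gt_eqF.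
  apply: continuousM; last by apply: continuousB; [exact: cvg_id|exact: cvg_cst].
  apply: continuousM; first exact: cvg_cst.
  by apply: continuousB; [exact: cvg_cst|exact: cvg_id].
have cB : {for x, continuous (fun v => lam / (sZ * Num.sqrt T * (v1 - v2)) *
    ln ((v2 - v) / (v - v1)) - (mu1 - mu2) / (sZ * Num.sqrt T * (v1 - v2)))}.
  apply: continuousB; last exact: cvg_cst.
  apply: continuousM; first exact: cvg_cst.
  exact: (cont_lnqf _ hx).
apply: (continuous_comp cB).
have hc := @continuous_normal_pdf R 0 1 (oner_neq0 _). exact: hc.
Qed.
Hypotheses (lam0 : 0 < lam) (v12 : v1 < v2).

Lemma EE_lt x y : x < y -> EE y < EE x.
Proof.
move=> xy; rewrite /EE ltr_expR ltrD2r.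
have k0 : k < 0 by rewrite /k pmulr_llt0 ?invr_gt0 // subr_lt0.
by rewrite ltr_nM2l.
Qed.

Lemma gform_lt : {homo gform : x y / x < y}.
Proof.
move=> x y xy; rewrite /gform ltrD2l ltr_pM2l ?subr_gt0 //.
rewrite ltf_pV2 ?posrE ?addr_gt0 ?ltr01 ?EE_gt0 //.
by rewrite ltrD2l EE_lt.
Qed.

Lemma gform_le : {mono gform : x y / x <= y}.
Proof. exact: le_mono gform_lt. Qed.

Lemma gform_ltE : {mono gform : x y / x < y}.
Proof. exact: leW_mono gform_le. Qed.

Lemma gform_in z : v1 < gform z < v2.
Proof.
have e0 := EE_gt0 z.
have p : 0 < (1 + EE z)^-1 by rewrite invr_gt0 addr_gt0 ?ltr01.
have p1 : (1 + EE z)^-1 < 1 by rewrite invf_lt1 ?addr_gt0 ?ltr01 // ltrDl.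
apply/andP; split; rewrite /gform.
  by rewrite ltrDl mulr_gt0 // subr_gt0.
by rewrite -ltrBrDl gtr_pMr // subr_gt0.
Qed.

Lemma hinv_gform z : hinv (gform z) = z.
Proof.
rewrite /hinv.
have e0 := EE_gt0 z.
have e1 : 1 + EE z != 0 by rewrite gt_eqF// addr_gt0// ?ltr01.
have d0 : v2 - v1 != 0 by rewrite subr_eq0 gt_eqF.
have d0' : v1 - v2 != 0 by rewrite subr_eq0 lt_eqF.
have l0 : lam != 0 by rewrite gt_eqF.
have -> : qf (gform z) = EE z.
  rewrite /qf.
  have -> : v2 - gform z = (v2-v1) * EE z / (1+EE z) by rewrite /gform; field.
  have -> : gform z - v1 = (v2-v1)/(1+EE z) by rewrite /gform; field.
  by field; rewrite e1 d0.
rewrite /EE expRK /k /c; field; by rewrite d0' l0.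
Qed.

Lemma gform_hinv v : v1 < v < v2 -> gform (hinv v) = v.
Proof.
move=> hv; have /andP[h1 h2] := hv.
have l0 : lam != 0 by rewrite gt_eqF.
have d0' : v1 - v2 != 0 by rewrite subr_eq0 lt_eqF.
rewrite /gform.
have -> : EE (hinv v) = qf v.
  rewrite /EE /hinv /k /c.
  have -> : (v1 - v2) / lam * ((lam * ln (qf v) - (mu1 - mu2)) / (v1 - v2)) +
     (mu1 - mu2) / lam = ln (qf v) by field; rewrite l0 d0'.
  by rewrite lnK // posrE qf_gt0.
have a0 : v - v1 != 0 by rewrite subr_eq0 gt_eqF.
have b0 : v2 - v1 != 0 by rewrite subr_eq0 gt_eqF.
rewrite /qf.
have -> : 1 + (v2 - v) / (v - v1) = (v2 - v1) / (v - v1) by field.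
by field; rewrite a0 b0.
Qed.

Lemma cont_EE z : {for z, continuous EE}.
Proof.
have cl : {for z, continuous (fun y : R => k * y + c)}.
  apply: continuousD; last exact: cvg_cst.
  by apply: continuousM; [exact: cvg_cst|exact: cvg_id].
rewrite /EE; exact: (continuous_comp cl (@continuous_expR R (k * z + c))).
Qed.

Lemma cont_Dg z : {for z, continuous Dg}.
Proof.
rewrite /Dg.
apply: continuousM.
  by apply: continuousM; [exact: cvg_cst|exact: cont_EE].
apply: continuousV; first by rewrite expf_neq0 // gt_eqF // addr_gt0 ?ltr01 ?EE_gt0.
have c1 : {for z, continuous (fun y => 1 + EE y)}.
  by apply: continuousD; [exact: cvg_cst|exact: cont_EE].
exact: (continuous_comp c1 (@exprn_continuous _ 2 _)).
Qed.

Lemma derive1_gform : (gform^`())%classic = Dg.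
Proof.
apply/funext => z; rewrite derive1E; apply: derive_val.
by apply: dgform; rewrite gt_eqF.
Qed.

Lemma der_gform z : derivable gform z 1.
Proof. apply: ex_derive; by apply: dgform; rewrite gt_eqF. Qed.

Lemma cont_gform z : {for z, continuous gform}.
Proof. exact/differentiable_continuous/derivable1_diffP/der_gform. Qed.

Lemma subst sZ T a b : 0 < sZ * Num.sqrt T -> a <= b ->
  (\int[lebesgue_measure]_(x in `[gform a, gform b]) (f_s lam sZ T v1 v2 mu1 mu2 x)%:E =
  \int[lebesgue_measure]_(x in `[a, b]) (normal_pdf 0 (sZ * Num.sqrt T) x)%:E)%E.
Proof.
move=> s0 ab.
rewrite (@integration_by_substitution_increasing R gform (f_s lam sZ T v1 v2 mu1 mu2) a b ab).
- apply: eq_integral => x _; rewrite derive1_gform /= -key //; congr EFin.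
- by move=> x y _ _; exact: gform_lt.
- by rewrite derive1_gform => x _; exact: cont_Dg.
- by rewrite derive1_gform; apply/cvg_ex; exists (Dg a); exact: cvg_at_right_filter (cont_Dg a).
- by rewrite derive1_gform; apply/cvg_ex; exists (Dg b); exact: cvg_at_left_filter (cont_Dg b).
- split; first by move=> x _; exact: der_gform.
  + exact: cvg_at_right_filter (cont_gform a).
  + exact: cvg_at_left_filter (cont_gform b).
- apply: continuous_in_subspaceT => x; rewrite inE /= in_itv /= => /andP[h1 h2].
  apply: cont_fs; first by rewrite gt_eqF.
  have /andP[ha _] := gform_in a; have /andP[_ hb] := gform_in b.
  by rewrite (lt_le_trans ha h1) (le_lt_trans h2 hb).
Qed.

End s.


Section main.
Context {R : realType}.
Variables (lam sZ T v1 v2 mu1 mu2 : R).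
Hypotheses (lam0 : 0 < lam) (v12 : v1 < v2) (s0 : 0 < sZ * Num.sqrt T).

Let I : set R := `]v1, v2[.
Let fs := f_s lam sZ T v1 v2 mu1 mu2.
Let h := hinv lam v1 v2 mu1 mu2.
Let g := gform lam v1 v2 mu1 mu2.

Let fs_ge0 x : I x -> 0 <= fs x.
Proof.
rewrite /I /fs /f_s /std_phi /= in_itv /= => /andP[h1 h2].
apply: mulr_ge0; last exact: normal_pdf_ge0.
apply: divr_ge0; first exact: ltW.
by apply: mulr_ge0; [apply: mulr_ge0; [exact: ltW|]|]; rewrite subr_ge0 ltW.
Qed.

Let mfs : measurable_fun I fs.
Proof.
apply: open_continuous_measurable_fun; first exact: interval_open.
move=> x; rewrite inE /I /= => hx.
by apply: cont_fs => //; rewrite gt_eqF.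
Qed.

Let mh : measurable_fun I h.
Proof.
apply: open_continuous_measurable_fun; first exact: interval_open.
by move=> x; rewrite inE /I /= => hx; apply: cont_hinv.
Qed.

Let mIh B : measurable B -> measurable (I `&` h @^-1` B).
Proof. by move=> mB; apply: mh => //; exact: measurable_itv. Qed.

Definition nu (B : set R) : \bar R :=
  (\int[lebesgue_measure]_(x in I `&` h @^-1` B) (fs x)%:E)%E.

Let nu0 : nu set0 = 0%E.
Proof. by rewrite /nu preimage_set0 setI0 integral_set0. Qed.

Let nu_ge0 B : (0 <= nu B)%E.
Proof. by apply: integral_ge0 => x [Ix _]; rewrite lee_fin fs_ge0. Qed.

Let nu_sa : semi_sigma_additive nu.
Proof.
move=> /= F mF tF mUF; rewrite /nu; apply: cvg_toP.
  apply: ereal_nondecreasing_is_cvgn => m n mn.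
  apply: lee_sum_nneg_natr => // k _ _; apply: integral_ge0 => /= x [Ix _].
  by rewrite lee_fin fs_ge0.
rewrite preimage_bigcup setI_bigcupr ge0_integral_bigcup//=.
- by move=> k; apply: mIh.
- apply/measurable_EFinP; apply: (measurable_funS _ _ mfs) => //.
    exact: measurable_itv.
  by move=> x [k _ []].
- by move=> x [k _ [Ix _]]; rewrite lee_fin fs_ge0.
- apply: trivIset_setIl => i j _ _ [x [hi hj]]; apply: tF => //.
  by exists (h x).
Qed.

Definition nuM : set (measurableTypeR R) -> \bar R := nu.
HB.instance Definition _ := isMeasure.Build _ _ _ nuM nu0 nu_ge0 nu_sa.

Let ghK x (hx : v1 < x < v2) : g (h x) = x := @gform_hinv R lam v1 v2 mu1 mu2 lam0 v12 x hx.
Let g_lt : {mono g : x y / x < y} := gform_ltE lam v1 v2 mu1 mu2 lam0 v12.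
Let g_le : {mono g : x y / x <= y} := gform_le lam v1 v2 mu1 mu2 lam0 v12.
Let g_in z : v1 < g z < v2 := gform_in lam v1 v2 mu1 mu2 v12 z.

Let set_eq_oc a b : I `&` h @^-1` `]a, b] = `]g a, g b]%classic.
Proof.
apply/seteqP; split => x /=.
  rewrite /I /= !in_itv /= => -[hx /andP[ah hb]].
  by rewrite -[x](ghK _ hx) g_lt ah g_le hb.
rewrite in_itv /= => /andP[ax xb].
have /andP[ha _] := g_in a.
have /andP[_ hb] := g_in b.
have hx : v1 < x < v2 by rewrite (lt_trans ha ax) (le_lt_trans xb hb).
split; first by rewrite /I /= in_itv /=.
rewrite /= in_itv /=.
by rewrite -g_lt -g_le (ghK _ hx) ax xb.
Qed.

Let nu_oc a b : a < b -> nu `]a, b] = normal_prob 0 (sZ * Num.sqrt T) `]a, b].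
Proof.
move=> ab; rewrite /nu set_eq_oc integral_itv_obnd_cbnd; last first.
  apply/measurable_EFinP; apply: (measurable_funS _ _ mfs) => //.
    exact: measurable_itv.
  move=> x; rewrite /I /= !in_itv /= => /andP[ax xb].
  have /andP[ha _] := g_in a; have /andP[_ hb] := g_in b.
  by rewrite (lt_trans ha ax) (le_lt_trans xb hb).
rewrite /fs /g (@subst R lam v1 v2 mu1 mu2 lam0 v12 sZ T a b s0 (ltW ab)).
rewrite /normal_prob integral_itv_obnd_cbnd //.
apply/measurable_EFinP; apply: measurable_funTS; exact: measurable_normal_pdf.
Qed.

Let coverT : \bigcup_k `]-(k%:R), (k%:R : R)]%classic = setT.
Proof.
apply/seteqP; split => // x _.
have : (\bigcup_n ball (0 : R) n%:R) x by rewrite bigcup_ballT.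
case=> n _ hn; exists n => //=.
move: hn; rewrite /ball /= sub0r normrN ltr_norml in_itv /= => /andP[h1 h2].
by rewrite h1 ltW.
Qed.

Lemma normal_nu B : measurable B -> normal_prob 0 (sZ * Num.sqrt T) B = nu B.
Proof.
move=> mB.
have := @measure_unique _ R (measurableTypeR R) (@ocitv R) (fun k => `]-(k%:R), (k%:R : R)]%classic) erefl (@ocitvI R)
  (fun n => is_ocitv _ _) coverT (normal_prob 0 (sZ * Num.sqrt T)) nuM.
move=> /(_ _ _ B mB); apply.
- move=> A /ocitvP[->|[[a b] /= ab ->]]; first by rewrite !measure0.
  by rewrite /nuM nu_oc.
- move=> k; apply: (le_lt_trans (probability_le1 _ _)) => //; exact: ltry.
Qed.

End main.

End Aux.
Import Aux.

Theorem corollary1 (R : realType) (v1 v2 p1 p2 lam sZ T mu1 mu2 : R) :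
  v1 < v2 -> 0 < p1 -> 0 < p2 -> p1 + p2 = 1 ->
  0 < lam -> 0 < sZ -> 0 < T ->
  (\int[normal_prob 0 (sZ * Num.sqrt T)]_z (post1 lam v1 v2 mu1 mu2 z)%:E)%E = p1%:E ->
  (\int[normal_prob 0 (sZ * Num.sqrt T)]_z (post2 lam v1 v2 mu1 mu2 z)%:E)%E = p2%:E ->
  forall A : set R, measurable A ->
    normal_prob 0 (sZ * Num.sqrt T) (cond_exp lam v1 v2 mu1 mu2 @^-1` A) =
    (\int[lebesgue_measure]_(v in A `&` `]v1, v2[) (f_s lam sZ T v1 v2 mu1 mu2 v)%:E)%E.
Proof.
move=> v12 _ _ _ l0 sZ0 T0 _ _ A mA.
have s0 : 0 < sZ * Num.sqrt T by rewrite mulr_gt0 // sqrtr_gt0.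
have -> : cond_exp lam v1 v2 mu1 mu2 @^-1` A = gform lam v1 v2 mu1 mu2 @^-1` A.
  by rewrite (funext (g_eq lam v1 v2 mu1 mu2 (lt0r_neq0 l0))).
have mgA : measurable (gform lam v1 v2 mu1 mu2 @^-1` A).
  have := continuous_measurable_fun (cont_gform lam v1 v2 mu1 mu2 l0).
  by move=> /(_ measurableT A mA); rewrite setTI.
rewrite (@normal_nu R lam sZ T v1 v2 mu1 mu2 l0 v12 s0 _ mgA) /nu.
have -> : `]v1, v2[ `&` hinv lam v1 v2 mu1 mu2 @^-1` (gform lam v1 v2 mu1 mu2 @^-1` A)
    = A `&` `]v1, v2[.
  apply/seteqP; split => x /=.
    move=> [Ix hA]; split => //.
    by rewrite -(gform_hinv lam v1 v2 mu1 mu2 l0 v12 x) //; move: Ix; rewrite /= in_itv.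
  move=> [Ax Ix]; split => //=.
  by rewrite gform_hinv //; move: Ix; rewrite /= in_itv.
by [].
Qed.
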